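(* Consider the networked closed-loop system described in the context. Assume: $Q,R,T$ are positive definite; $(Q^{1/2},A)$ is observable; $\rho(A-BK)<1$ and $\rho(A-B\bar K)<1$; $P=(A-B\bar K)^\top P(A-B\bar K)+Q+\bar K^\top R\bar K$; and the network satisfies $\mathrm{Prob}\big(\bigcap_{t\ge k}\{\gamma_{t-1}\theta_t=0\}\big)=0$ for all $k\ge0$. Suppose there exists $k_0$ such that $\gamma_{k_0-1}=1$, $\theta_{k_0}=1$, $x(k_0)-x_n(k_0)\in\mathbb{Z}_K$, and the MPC optimization problem is feasible. If the consistent actuator and the ancillary controller are used, then the MPC optimization problem is feasible and $x(k)\in\mathbb{X}$ and $u(k)\in\mathbb{U}$ for all $k\ge k_0$.
   Context: Plant: $x(k+1)=Ax(k)+Bu(k)+w(k)$ with $x(k)\in\mathbb{R}^{n_x}$, $u(k)\in\mathbb{R}^{n_u}$, $(A,B)$ stabilizable, and $w(k)\in\mathbb{W}=\{w: H_w w\le h_w\}$ for all $k$, where $\mathbb{W}$ is compact and contains the origin in its interior. State and input constraint sets $\mathbb{X}=\{x:H_x x\le h_x\}$, $\mathbb{U}=\{u:H_u u\le h_u\}$ are bounded and contain the origin in their interior. $\oplus$ is the Minkowski sum, $\ominus$ the Pontryagin difference, $M\mathbb{P}=\{Mp:p\in\mathbb{P}\}$. Network: binary variables $\theta_k$ ($=1$ iff the packet $U_k$ sent by the remote controller at time $k$ is received by the plant) and $\gamma_k$ ($=1$ iff the packet $X_k$ sent by the plant at time $k$ is received by the controller). Sets: $\mathbb{Z}_K=\bigoplus_{i=0}^\infty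 (A-BK)^i\mathbb{W}$; $\mathbb{X}_c=\mathbb{X}\ominus\mathbb{Z}_K$, $\mathbb{U}_c=\mathbb{U}\ominus(-K)\mathbb{Z}_K$. With $x_a=(x_n,\bar x,\bar u)$ and $A_a=\begin{bmatrix}A-B\bar K & B\bar K & B\\ 0& I&0\\0&0&I\end{bmatrix}$, $X_{f,\bar K}=\{x_a: A_a^k x_a\in\mathbb{X}_{a,\bar K}\ \forall k\ge0\}$ where $\mathbb{X}_{a,\bar K}=\{x_a: x_n\in\mathbb{X}_c,\ \bar u-\bar K(x_n-\bar x)\in\mathbb{U}_c\}$; for fixed $\lambda\in(0,1)$, $X^\lambda_{f,\bar K}=X_{f,\bar K}\cap\{(x_n,\bar x,\bar u):\bar x\in\lambda\mathbb{X}_c,\ \bar u\in\lambda\mathbb{U}_c\}$. Remote MPC at time $k$ (horizon $N$, reference $x_r$): minimize over $\mathbf{u}(0),\dots,\mathbf{u}(N-1),\bar x,\bar u$ the cost $\sum_{i=0}^{N-1}(\|\mathbf{x}(i)-\bar x\|_Q^2+\|\mathbf{u}(i)-\bar u\|_R^2)+\|\mathbf{x}(N)-\bar x\|_P^2+\|\bar x-x_r\|_T^2$ subject to $\mathbf{x}(i+1)=A\mathbf{x}(i)+B\mathbf{u}(i)$, $\mathbf{x}(i)\in\mathbb{X}_c$, $\mathbf{u}(i)\in\mathbb{U}_c$ for $i=0,\dots,N-1$, $\mathbf{x}(0)=\hat x(k|k-1)$, $(\mathbf{x}(N),\bar x,\bar u)\in X^\lambda_{f,\bar K}$, $(A-I)\bar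 x+B\bar u=0$. With optimal solution $\mathbf{u}^*_k,\bar x^*_k,\bar u^*_k$, the controller sends $U_k=\{\mathbf{u}^*_k,\ \bar u^*_k+\bar K\bar x^*_k,\ q_k\}$. Local side: $\Theta_k=\prod_{i=q_k+1}^k\theta_i$ if $\theta_k=1$ and $\Theta_k=0$ otherwise; $s_k=\Theta_k k+(1-\Theta_k)s_{k-1}$. Consistent actuator: $u_n(k)=\mathbf{u}^*_{s_k}(k-s_k)$ if $k-s_k<N$, else $u_n(k)=\bar u^*_{s_k}+\bar K\bar x^*_{s_k}-\bar K x_n(k)$. Nominal model $x_n(k+1)=Ax_n(k)+Bu_n(k)$. Ancillary controller $u(k)=u_n(k)-K(x(k)-x_n(k))$. The plant sends $X_k=\{x_n(k),s_k\}$. Remote estimator: $\hat x(k+1|k)=A\hat x(k|k)+B\hat u(k|k)$ with $\hat x(k|k)=\gamma_k x_n(k)+(1-\gamma_k)\hat x(k|k-1)$, $\hat u(k|k)=\gamma_k u_n(k)+(1-\gamma_k)\mathbf{u}^*_k(0)$ (with $u_n(k)$ recomputed remotely by the consistent actuator rule from $s_k$), and $q_{k+1}=\gamma_k k+(1-\gamma_k)q_k$. *)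

(* Defs.v *)
From HB Require Import structures.
From mathcomp Require Import all_boot all_order all_algebra.
From mathcomp Require Import all_classical all_reals all_analysis.
From mathcomp Require Import complex.

Set Implicit Arguments.
Unset Strict Implicit.
Unset Printing Implicit Defensive.

Import Order.TTheory GRing.Theory Num.Theory.
Import numFieldNormedType.Exports.

Local Open Scope classical_set_scope.
Local Open Scope ring_scope.

Section Sets.
Variable R : realType.

Definition lecV n (v w : 'cV[R]_n) : Prop := forall i, v i 0 <= w i 0.

Definition polyhedron n p (H : 'M[R]_(p, n)) (h : 'cV[R]_p) : set 'cV[R]_n :=
  [set x | lecV (H *m x) h].

Definition mx_image m n (M : 'M[R]_(m, n)) (S : set 'cV[R]_n) : set 'cV[R]_m :=
  [set M *m z | z in S].

Definition pdiff n (S Z : set 'cV[R]_n) : set 'cV[R]_n :=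
  [set x | forall z, Z z -> S (x + z)].

Definition scale_set n (lam : R) (S : set 'cV[R]_n) : set 'cV[R]_n :=
  [set lam *: z | z in S].

Definition inf_msum n (Phi : 'M[R]_n) (W : set 'cV[R]_n) : set 'cV[R]_n :=
  [set z | exists ws : nat -> 'cV[R]_n, (forall i, W (ws i)) /\
      (fun N : nat => \sum_(i < N) (Phi ^+ i *m ws i)) @ \oo --> z].

Definition spec_rad_lt1 n (M : 'M[R]_n) : Prop :=
  forall l : R[i], eigenvalue (map_mx (real_complex R) M) l -> `|l| < 1.

Definition qf n (M : 'M[R]_n) (v : 'cV[R]_n) : R := (v^T *m M *m v) 0 0.

Definition posdef n (M : 'M[R]_n) : Prop :=
  M^T = M /\ forall v : 'cV[R]_n, v != 0 -> 0 < qf M v.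

Definition possemidef n (M : 'M[R]_n) : Prop :=
  M^T = M /\ forall v : 'cV[R]_n, 0 <= qf M v.

Definition observable p n (C : 'M[R]_(p, n)) (A : 'M[R]_n) : Prop :=
  forall v : 'cV[R]_n, (forall i : nat, C *m (A ^+ i *m v) = 0) -> v = 0.

Definition stabilizable nx nu (A : 'M[R]_nx) (B : 'M[R]_(nx, nu)) : Prop :=
  exists K : 'M[R]_(nu, nx), spec_rad_lt1 (A - B *m K).

End Sets.

Section MPC.
Variables (R : realType) (nx nu : nat).
Variables (A : 'M[R]_nx) (B : 'M[R]_(nx, nu)) (Kb : 'M[R]_(nu, nx)).
Variables (Xc : set 'cV[R]_nx) (Uc : set 'cV[R]_nu) (lam : R).

(* one step of x_a(k+1) = A_a x_a(k), x_a = (x_n, xbar, ubar) *)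
Definition Aa_step (xa : 'cV[R]_nx * 'cV[R]_nx * 'cV[R]_nu) :=
  let: (xn, xb, ub) := xa in
  ((A - B *m Kb) *m xn + B *m Kb *m xb + B *m ub, xb, ub).

Definition Xa_set (xa : 'cV[R]_nx * 'cV[R]_nx * 'cV[R]_nu) : Prop :=
  let: (xn, xb, ub) := xa in Xc xn /\ Uc (ub - Kb *m (xn - xb)).

Definition Xf_set (xa : 'cV[R]_nx * 'cV[R]_nx * 'cV[R]_nu) : Prop :=
  forall k : nat, Xa_set (iter k Aa_step xa).

Definition Xf_lam (xa : 'cV[R]_nx * 'cV[R]_nx * 'cV[R]_nu) : Prop :=
  Xf_set xa /\ scale_set lam Xc xa.1.2 /\ scale_set lam Uc xa.2.

Fixpoint pred_state (x0 : 'cV[R]_nx) (u : nat -> 'cV[R]_nu) (i : nat) : 'cV[R]_nx :=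
  match i with
  | 0 => x0
  | i'.+1 => A *m pred_state x0 u i' + B *m u i'
  end.

Variables (N : nat) (Q : 'M[R]_nx) (Rw : 'M[R]_nu) (T P : 'M[R]_nx)
  (xr : 'cV[R]_nx).

(* constraints of the MPC problem with initial state x0; decision variables
   u(0..N-1) (values of u beyond N-1 are irrelevant), xbar, ubar *)
Definition mpc_admissible (x0 : 'cV[R]_nx) (u : nat -> 'cV[R]_nu)
    (xb : 'cV[R]_nx) (ub : 'cV[R]_nu) : Prop :=
  (forall i, (i < N)%N -> Xc (pred_state x0 u i) /\ Uc (u i)) /\
  Xf_lam (pred_state x0 u N, xb, ub) /\
  (A - 1%:M) *m xb + B *m ub = 0.

Definition mpc_cost (x0 : 'cV[R]_nx) (u : nat -> 'cV[R]_nu)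
    (xb : 'cV[R]_nx) (ub : 'cV[R]_nu) : R :=
  \sum_(i < N) (qf Q (pred_state x0 u i - xb) + qf Rw (u i - ub))
  + qf P (pred_state x0 u N - xb) + qf T (xb - xr).

Definition mpc_feasible (x0 : 'cV[R]_nx) : Prop :=
  exists u xb ub, mpc_admissible x0 u xb ub.

Definition mpc_optimal (x0 : 'cV[R]_nx) (u : nat -> 'cV[R]_nu)
    (xb : 'cV[R]_nx) (ub : 'cV[R]_nu) : Prop :=
  mpc_admissible x0 u xb ub /\
  forall u' xb' ub', mpc_admissible x0 u' xb' ub' ->
    mpc_cost x0 u xb ub <= mpc_cost x0 u' xb' ub'.

Record trajectory := Traj {
  tr_x : nat -> 'cV[R]_nx;
  tr_xn : nat -> 'cV[R]_nx;
  tr_u : nat -> 'cV[R]_nu;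
  tr_un : nat -> 'cV[R]_nu;
  tr_s : nat -> nat;
  tr_q : nat -> nat;
  tr_xhat : nat -> 'cV[R]_nx;
  tr_useq : nat -> nat -> 'cV[R]_nu;
  tr_xbar : nat -> 'cV[R]_nx;
  tr_ubar : nat -> 'cV[R]_nu
}.

Definition Theta (theta : nat -> bool) (q : nat -> nat) (k : nat) : bool :=
  theta k && all theta (index_iota (q k).+1 k.+1).

Definition cons_act (tr : trajectory) (k : nat) : 'cV[R]_nu :=
  let s := tr_s tr k in
  if (k - s < N)%N then tr_useq tr s (k - s)
  else tr_ubar tr s + Kb *m tr_xbar tr s - Kb *m tr_xn tr k.

Variable K : 'M[R]_(nu, nx).

(* the closed loop: plant, consistent actuator, nominal model, ancillary
   controller, remote estimator and remote MPC (which transmits an optimal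
   solution whenever the problem is feasible) *)
Definition closed_loop (theta gamma : nat -> bool) (w : nat -> 'cV[R]_nx)
    (tr : trajectory) : Prop :=
  (forall k, tr_x tr k.+1 = A *m tr_x tr k + B *m tr_u tr k + w k) /\
  (forall k, tr_xn tr k.+1 = A *m tr_xn tr k + B *m tr_un tr k) /\
  (forall k, tr_u tr k = tr_un tr k - K *m (tr_x tr k - tr_xn tr k)) /\
  (forall k, tr_un tr k = cons_act tr k) /\
  (forall k, tr_s tr k.+1 =
     if Theta theta (tr_q tr) k.+1 then k.+1 else tr_s tr k) /\
  (forall k, tr_q tr k.+1 = if gamma k then k else tr_q tr k) /\
  (forall k, tr_xhat tr k.+1 =
     A *m (if gamma k then tr_xn tr k else tr_xhat tr k)
     + B *m (if gamma k then tr_un tr k else tr_useq tr k 0)) /\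
  (forall k, mpc_feasible (tr_xhat tr k) ->
     mpc_optimal (tr_xhat tr k) (tr_useq tr k) (tr_xbar tr k) (tr_ubar tr k)).

End MPC.

(* Main.v *)
Require Import Defs.
From HB Require Import structures.
From mathcomp Require Import all_boot all_order all_algebra.
From mathcomp Require Import all_classical all_reals all_analysis.
From mathcomp Require Import complex.
Import Order.TTheory GRing.Theory Num.Theory.
Import numFieldNormedType.Exports.
Local Open Scope classical_set_scope.
Local Open Scope ring_scope.
From mathcomp Require Import zify.

Lemma mulmx_cvg (R : realType) m n (M : 'M[R]_(m, n)) (f : nat -> 'cV[R]_n) z :
  f @ \oo --> z -> (fun k => M *m f k) @ \oo --> M *m z.
Proof.
move=> Hf.
have E : forall v : 'cV[R]_n, M *m v = \sum_(j < n) (v j 0 *: col j M).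
  move=> v; apply/matrixP => i k; rewrite !mxE summxE.
  by apply: eq_bigr => j _; rewrite !mxE ord1 mulrC.
rewrite E; under eq_fun do rewrite E.
apply: (@cvg_big _ _ +%R 0 xpredT (@add_continuous _) nat \oo (index_enum 'I_n) (fun j k => f k j 0 *: col j M) (fun j => z j 0 *: col j M)).
move=> j _; apply: cvgZ; last exact: cvg_cst.
exact: (cvg_comp _ _ Hf (@coord_continuous R n 1 j 0 z)).
Qed.

Lemma ZK_step (R : realType) n (Phi : 'M[R]_n) (W : set 'cV[R]_n) z w :
  inf_msum Phi W z -> W w -> inf_msum Phi W (Phi *m z + w).
Proof.
move=> [ws [Hws Hc]] Hw.
pose g := fun i : nat => if i is i'.+1 then ws i' else w.
exists g; split; first by case.
rewrite -cvg_shiftS /=.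
have E : forall M, \sum_(i < M.+1) (Phi ^+ i *m g i)
   = Phi *m (\sum_(i < M) (Phi ^+ i *m ws i)) + w.
  move=> M; rewrite big_ord_recl /= expr0 mul1mx addrC mulmx_sumr; congr (_ + _).
  by apply: eq_bigr => i _; rewrite /= exprS mulmxA.
under eq_fun do rewrite E.
apply: cvgD; last exact: cvg_cst.
exact: mulmx_cvg.
Qed.

Lemma zaux (V : zmodType) (a b c f w : V) : a + (b - c) + w - (f + b) = a - f - c + w.
Proof.
rewrite [b - c]addrC addrA -[a - c + b + w]addrA [b + w]addrC addrA opprD addrA [_ + b - f]addrAC addrK.
rewrite addrAC [a - c - f]addrAC.
by [].
Qed.

Lemma err_aux (R : realType) nx nu (A : 'M[R]_nx) (B : 'M[R]_(nx,nu)) (K : 'M[R]_(nu,nx))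
  (x xn w : 'cV[R]_nx) (un : 'cV[R]_nu) :
  A *m x + B *m (un - K *m (x - xn)) + w - (A *m xn + B *m un) = (A - B *m K) *m (x - xn) + w.
Proof.
by rewrite mulmxBl [A *m (x - xn)]mulmxBr mulmxBr -mulmxA zaux.
Qed.

Section Tail.
Variables (R : realType) (nx nu : nat).
Variables (A : 'M[R]_nx) (B : 'M[R]_(nx, nu)) (Kb : 'M[R]_(nu, nx)).
Variables (Xc : set 'cV[R]_nx) (Uc : set 'cV[R]_nu) (lam : R) (N : nat).
Variables (x0 : 'cV[R]_nx) (u : nat -> 'cV[R]_nu) (xb : 'cV[R]_nx) (ub : 'cV[R]_nu).

Fixpoint ext (j : nat) : 'cV[R]_nx :=
  match j with
  | 0 => x0
  | j'.+1 => A *m ext j' + B *m (if (j' < N)%N then u j' else ub + Kb *m xb - Kb *m ext j')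
  end.

Definition extu j := if (j < N)%N then u j else ub + Kb *m xb - Kb *m ext j.

Lemma extS j : ext j.+1 = A *m ext j + B *m extu j.
Proof. by []. Qed.

Lemma ext_predN j : (j <= N)%N -> ext j = pred_state A B x0 u j.
Proof.
elim: j => [//|j IH] Hj /=.
by rewrite Hj IH // ltnW.
Qed.

Lemma zmod_aux (V : zmodType) (a b c d : V) : a - c + d + b = a + (b + d - c).
Proof.
by rewrite -!addrA; congr (_ + _); rewrite [d + b]addrC addrCA [d - c]addrC.
Qed.

Lemma ext_iter m : iter m (Aa_step A B Kb) (ext N, xb, ub) = (ext (N + m), xb, ub).
Proof.
elim: m => [|m IH]; first by rewrite addn0.
rewrite iterS IH addnS /= ltnNge leq_addr /=.
congr (_, _, _).
by rewrite mulmxBl !mulmxDr mulmxN !mulmxA zmod_aux.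
Qed.

Hypothesis Hadm : mpc_admissible A B Kb Xc Uc lam N x0 u xb ub.

Lemma ext_cons m : Xc (ext m) /\ Uc (extu m).
Proof.
case: Hadm => H1 [[H2 [H3 H4]] H5].
rewrite /extu; case: ltnP => Hm.
  by rewrite ext_predN ?(ltnW Hm) //; apply: H1.
have := H2 (m - N)%N; rewrite -ext_predN // ext_iter subnKC //= => -[Ha Hb].
split => //.
by move: Hb; rewrite mulmxBr opprB addrA.
Qed.

Lemma ext_adm j : mpc_admissible A B Kb Xc Uc lam N (ext j) (fun i => extu (j + i)) xb ub.
Proof.
have Hp : forall i, pred_state A B (ext j) (fun i => extu (j + i)) i = ext (j + i).
  elim => [|i IH]; first by rewrite addn0.
  by rewrite /= IH addnS.
case: Hadm => H1 [[H2 [H3 H4]] H5].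
split; first by move=> i _; rewrite Hp; apply: ext_cons.
split => //; split => //.
rewrite Hp addnC -ext_iter => k.
rewrite -iterD; have := H2 (k + j)%N; by rewrite ext_predN.
Qed.

Lemma ext_feas j : mpc_feasible A B Kb Xc Uc lam N (ext j).
Proof. by exists (fun i => extu (j + i)), xb, ub; apply: ext_adm. Qed.

End Tail.
Arguments ext {R nx nu} A B Kb N x0 u xb ub j.
Arguments extu {R nx nu} A B Kb N x0 u xb ub j.
Arguments extS {R nx nu} A B Kb N x0 u xb ub j.
Arguments ext_feas {R nx nu A B Kb Xc Uc lam N x0 u xb ub} Hadm j.
Arguments ext_cons {R nx nu A B Kb Xc Uc lam N x0 u xb ub} Hadm m.
Theorem proposition2 (R : realType) (nx nu pw px pu : nat)
  (A : 'M[R]_nx) (B : 'M[R]_(nx, nu)) (K Kb : 'M[R]_(nu, nx))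
  (Hw : 'M[R]_(pw, nx)) (hw : 'cV[R]_pw)
  (Hx : 'M[R]_(px, nx)) (hx : 'cV[R]_px)
  (Hu : 'M[R]_(pu, nu)) (hu : 'cV[R]_pu)
  (Q : 'M[R]_nx) (Rw : 'M[R]_nu) (T P : 'M[R]_nx) (xr : 'cV[R]_nx)
  (N : nat) (lam : R)
  (d : measure_display) (Omega : measurableType d) (Pr : probability Omega R)
  (theta gamma : nat -> Omega -> bool) :
  let W := polyhedron Hw hw in
  let X := polyhedron Hx hx in
  let U := polyhedron Hu hu in
  let ZK := inf_msum (A - B *m K) W in
  let Xc := pdiff X ZK in
  let Uc := pdiff U (mx_image (- K) ZK) in
  stabilizable A B ->
  compact W -> (W°) 0 ->
  bounded_set X -> (X°) 0 ->
  bounded_set U -> (U°) 0 ->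
  posdef Q -> posdef Rw -> posdef T ->
  (exists Qh : 'M[R]_nx, possemidef Qh /\ Qh *m Qh = Q /\ observable Qh A) ->
  spec_rad_lt1 (A - B *m K) -> spec_rad_lt1 (A - B *m Kb) ->
  P = (A - B *m Kb)^T *m P *m (A - B *m Kb) + Q + Kb^T *m Rw *m Kb ->
  (0 < lam < 1) -> (0 < N)%N ->
  (forall t, measurable [set om | theta t om]) ->
  (forall t, measurable [set om | gamma t om]) ->
  (forall k : nat, (0 < k)%N ->
     Pr (\bigcap_(t in [set t : nat | (k <= t)%N])
           [set om | gamma t.-1 om && theta t om = false]) = 0%E) ->
  forall (om : Omega) (w : nat -> 'cV[R]_nx)
         (tr : trajectory R nx nu) (k0 : nat),
  (forall k, W (w k)) ->
  closed_loop A B Kb Xc Uc lam N Q Rw T P xr K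
    (fun k => theta k om) (fun k => gamma k om) w tr ->
  (0 < k0)%N -> gamma k0.-1 om -> theta k0 om ->
  ZK (tr_x tr k0 - tr_xn tr k0) ->
  mpc_feasible A B Kb Xc Uc lam N (tr_xhat tr k0) ->
  forall k, (k0 <= k)%N ->
    mpc_feasible A B Kb Xc Uc lam N (tr_xhat tr k) /\
    X (tr_x tr k) /\ U (tr_u tr k).
Proof.
Proof.
move=> W X U ZK Xc Uc _ _ _ _ _ _ _ _ _ _ _ _ _ _ _ HN _ _ _ om w tr k0 Hwk HCL Hk0 Hg Ht HZ Hf0.
case: HCL => [Hpx [Hxn [Hpu [Hun [Hs [Hq [Hxh Hopt]]]]]]].
have HunE : forall k, tr_xn tr k = ext A B Kb N (tr_xhat tr (tr_s tr k)) (tr_useq tr (tr_s tr k))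
      (tr_xbar tr (tr_s tr k)) (tr_ubar tr (tr_s tr k)) (k - tr_s tr k) ->
    tr_un tr k = extu A B Kb N (tr_xhat tr (tr_s tr k)) (tr_useq tr (tr_s tr k))
      (tr_xbar tr (tr_s tr k)) (tr_ubar tr (tr_s tr k)) (k - tr_s tr k).
  by move=> k He; rewrite Hun /cons_act He.
have Inv : forall dd, let k := (k0 + dd)%N in
  [/\ (tr_q tr k < k)%N,
      ((all (fun i => theta i om) (index_iota (tr_q tr k).+1 k.+1) -> tr_xhat tr k = tr_xn tr k)),
      mpc_feasible A B Kb Xc Uc lam N (tr_xhat tr k),
      (tr_s tr k <= k)%N &
      mpc_admissible A B Kb Xc Uc lam N (tr_xhat tr (tr_s tr k)) (tr_useq tr (tr_s tr k))
         (tr_xbar tr (tr_s tr k)) (tr_ubar tr (tr_s tr k)) /\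
      tr_xn tr k = ext A B Kb N (tr_xhat tr (tr_s tr k)) (tr_useq tr (tr_s tr k))
      (tr_xbar tr (tr_s tr k)) (tr_ubar tr (tr_s tr k)) (k - tr_s tr k)].
  elim => [|dd IH] /=.
    rewrite addn0.
    case: k0 Hk0 Hg Ht HZ Hf0 => // p _ Hg Ht _ Hf0.
    have Hp : tr_q tr p.+1 = p by rewrite Hq Hg.
    have Hxh0 : tr_xhat tr p.+1 = tr_xn tr p.+1 by rewrite Hxh Hxn Hg.
    have HTh : Theta (fun k => theta k om) (tr_q tr) p.+1 = true.
      by rewrite /Theta Hp /index_iota subSS subSnn /= Ht.
    have Hs0 : tr_s tr p.+1 = p.+1 by rewrite Hs HTh.
    split.
    - by rewrite Hp.
    - by move=> _.
    - exact: Hf0.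
    - by rewrite Hs0.
    split.
    - by rewrite Hs0; exact: (Hopt _ Hf0).1.
    - by rewrite Hs0 subnn /=.
  move: IH; rewrite addnS /=; set k := (k0 + dd)%N.
  have Hk1 : (0 < k)%N by rewrite /k; lia.
  case=> Hqk Hcons Hfk [Hsk [Hadk Hxnk]].
  have Hunk := HunE k Hxnk.
  have Hxn1 : tr_xn tr k.+1 = ext A B Kb N (tr_xhat tr (tr_s tr k)) (tr_useq tr (tr_s tr k))
      (tr_xbar tr (tr_s tr k)) (tr_ubar tr (tr_s tr k)) (k.+1 - tr_s tr k).
    by rewrite Hxn (subSn Hsk) extS -Hxnk -Hunk.
  have Hxh1 : tr_xhat tr k.+1 = if gamma k om then tr_xn tr k.+1
      else A *m tr_xhat tr k + B *m tr_useq tr k 0.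
    by rewrite Hxh Hxn; case: (gamma k om).
  have Hq1 : tr_q tr k.+1 = if gamma k om then k else tr_q tr k by rewrite Hq.
  have Hcons1 : all (fun i => theta i om) (index_iota (tr_q tr k.+1).+1 k.+2) ->
      tr_xhat tr k.+1 = tr_xn tr k.+1.
    rewrite Hxh1 Hq1; case: ifP => // Hgk Hall.
    have Hall' : forall i, (tr_q tr k < i)%N -> (i <= k.+1)%N -> theta i om.
      move=> i H1 H2; apply: (allP Hall); rewrite mem_index_iota; apply/andP; split; lia.
    have HallK : all (fun i => theta i om) (index_iota (tr_q tr k).+1 k.+1).
      apply/allP => i; rewrite mem_index_iota => /andP[H1 H2]; apply: Hall'; lia.
    have Hxk := Hcons HallK.
    have Htk : theta k om by apply: Hall'; lia.
    have HTh : Theta (fun k => theta k om) (tr_q tr) k = true by rewrite /Theta Htk HallK.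
    have Hsk' : tr_s tr k = k.
      by have := Hs k.-1; rewrite prednK // HTh.
    by rewrite Hxn Hun /cons_act Hsk' subnn HN Hxk.
  have Hf1 : mpc_feasible A B Kb Xc Uc lam N (tr_xhat tr k.+1).
    rewrite Hxh1; case: ifP => _.
      by rewrite Hxn1; exact: (ext_feas Hadk).
    have Had := (Hopt k Hfk).1.
    by have := ext_feas Had 1; rewrite /= HN.
  split.
  - by rewrite Hq1; case: ifP => _; lia.
  - exact: Hcons1.
  - exact: Hf1.
  - by rewrite Hs; case: ifP => _; lia.
  split.
  - by rewrite Hs; case: ifP => _ //; exact: (Hopt _ Hf1).1.
  - rewrite Hs; case: ifP => HT; last exact: Hxn1.
    rewrite subnn /=; symmetry; apply: Hcons1; move: HT; rewrite /Theta.
    by case/andP.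
have Herr : forall dd, ZK (tr_x tr (k0 + dd) - tr_xn tr (k0 + dd)).
  elim => [|dd IH]; first by rewrite addn0.
  rewrite addnS Hpx Hxn Hpu err_aux.
  by apply: ZK_step.
move=> k Hk.
have [dd ->] : exists dd, k = (k0 + dd)%N by exists (k - k0)%N; rewrite subnKC.
case: (Inv dd) => /= _ _ Hf [Hsk [Hadk Hxnk]].
split => //.
have [HXc HUc] := ext_cons Hadk (k0 + dd - tr_s tr (k0 + dd)).
rewrite -Hxnk in HXc; rewrite -(HunE _ Hxnk) in HUc.
split.
- by have := HXc _ (Herr dd); rewrite addrCA subrr addr0.
- have Hz : mx_image (- K) ZK (- K *m (tr_x tr (k0 + dd) - tr_xn tr (k0 + dd))).
    by exists (tr_x tr (k0 + dd) - tr_xn tr (k0 + dd)).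
  by move: (HUc _ Hz); rewrite Hpu mulNmx.
Qed.
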